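(* Let $C$ be an Additive-CSP($\psi$) constraint on variables $x_1,\dots,x_k$, let $G$ be its label-extended graph and $G^0$ the label-extended graph of the homogeneous constraint $C^0$. Then: (Completeness) for each assignment $\alpha:\{x_1,\dots,x_k\}\to H$ satisfying $C$ there is an $\alpha$-permutation $f$ which is a homomorphism from $G$ to $G^0$; (Soundness) if $f$ is an $\alpha$-permutation which is a homomorphism from $G$ to $G^0$, then $\alpha$ satisfies $C$.
   Context: $H$ is a finite abelian group, $k\ge3$, and $\psi\subseteq H^k$ is a balanced pairwise independent subgroup: a proper subgroup of $H^k$ such that for $a$ uniform in $\psi$ each coordinate is uniform on $H$ and any two coordinates are independent. An Additive-CSP($\psi$) constraint $C$ on distinct variables $x_1,\dots,x_k$ (taking values in $H$) has the form $\psi(x_1+a_1,\dots,x_k+a_k)=1$ with $a_i\in H$; its homogeneous version $C^0$ is $\psi(x_1,\dots,x_k)=1$. The label-extended graph of $C$ has variable vertices $x_i\mapsto b$ for $i\in[k]$, $b\in H$, and one constraint vertex for each assignment $\beta:\{x_1,\dots,x_k\}\to H$ satisfying $C$; its only edges join each constraint vertex $\beta$ to the $k$ variable vertices $x_i\mapsto\beta(x_i)$. The label-extended graphs of $C$ and $C^0$ share the names of variable vertices. For an assignment $\alpha$, a bijection $f$ from the vertices of $G$ to the vertices of $G^0$ is an $\alpha$-permutation if $f(x_i\mapsto b)=x_i\mapsto(b-\alpha(x_i))$ for every $i\in[k]$ and $b\in H$. $f$ is a homomorphism from $G$ to $G^0$ if it maps every edge of $G$ to an edge of $G^0$. *)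

(* Defs.v *)
From HB Require Import structures.
From mathcomp Require Import all_boot all_order all_algebra.
Set Implicit Arguments. Unset Strict Implicit. Unset Printing Implicit Defensive.
Import GRing.Theory.
Local Open Scope ring_scope.

Definition tup (H : finZmodType) (k : nat) := {ffun 'I_k -> H}.

Section Defs.
Variables (H : finZmodType) (k : nat).

Definition is_subgroup (psi : {set tup H k}) : Prop :=
  [ffun=> 0] \in psi /\
  (forall x y, x \in psi -> y \in psi -> [ffun i => x i - y i] \in psi).

(* balanced pairwise independent subgroup: proper subgroup; for a uniform
   in psi each coordinate is uniform on H, and any two coordinates are
   independent (counting formulation of the uniform distribution on psi). *)
Definition balanced_pairwise_independent (psi : {set tup H k}) : Prop :=
  [/\ is_subgroup psi,
      psi \proper [set: tup H k],
      (forall (i : 'I_k) (b : H),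
          (#|[set x in psi | x i == b]| * #|{: H}| = #|psi|)%N) &
      (forall (i j : 'I_k), i != j -> forall (b c : H),
          (#|[set x in psi | (x i == b) && (x j == c)]| * (#|{: H}| * #|{: H}|)
             = #|psi|)%N)].

(* The constraint psi(x_1 + a_1, ..., x_k + a_k) = 1 on distinct variables
   x_1..x_k (indexed by 'I_k); an assignment is beta : 'I_k -> H. *)
Definition sat (psi : {set tup H k}) (a : tup H k) (beta : tup H k) : bool :=
  [ffun i => beta i + a i] \in psi.

(* vertices of label-extended graphs: variable vertices (x_i |-> b) = inl (i,b),
   constraint vertices = inr beta. *)
Definition vtx := (('I_k * H) + tup H k)%type.

Definition is_vertex psi a (v : vtx) : bool :=
  match v with inl _ => true | inr beta => sat psi a beta end.

Definition LEvert psi a := {v : vtx | is_vertex psi a v}.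

Definition LEedge (u v : vtx) : bool :=
  match u, v with
  | inr beta, inl (i, b) => beta i == b
  | inl (i, b), inr beta => beta i == b
  | _, _ => false
  end.

Definition alpha_perm psi a a' (alpha : tup H k)
  (f : LEvert psi a -> LEvert psi a') : Prop :=
  forall (u : LEvert psi a) (i : 'I_k) (b : H),
    val u = inl (i, b) -> val (f u) = inl (i, b - alpha i).

Definition is_hom psi a a' (f : LEvert psi a -> LEvert psi a') : Prop :=
  forall u v : LEvert psi a, LEedge (val u) (val v) -> LEedge (val (f u)) (val (f v)).

End Defs.

(* Main.v *)
Require Import Defs.
From mathcomp Require Import all_boot all_order all_algebra.
Local Open Scope ring_scope.
Import GRing.Theory.

Lemma mem_eq {T : finType} {S : {set T}} {x y} : x \in S -> x = y -> y \in S.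
Proof. by move=> h <-. Qed.

Section Aux.
Variables (H : finZmodType) (k : nat) (psi : {set tup H k}).
Hypothesis hs : is_subgroup psi.

Lemma sg_sub {x y : tup H k} : x \in psi -> y \in psi ->
  [ffun i => x i - y i] \in psi.
Proof. by case: hs => _; apply. Qed.

Lemma sg_neg {x : tup H k} : x \in psi -> [ffun i => - x i] \in psi.
Proof.
move=> hx; case: hs => h0 _.
have := sg_sub h0 hx.
have -> : [ffun i => ([ffun=> 0] : tup H k) i - x i] = [ffun i => - x i].
  by apply/ffunP => i; rewrite !ffunE sub0r.
by [].
Qed.

Lemma sg_add {x y : tup H k} : x \in psi -> y \in psi ->
  [ffun i => x i + y i] \in psi.
Proof.
move=> hx hy; have := sg_sub hx (sg_neg hy).
have -> : [ffun i => x i - [ffun i => - y i] i] = [ffun i => x i + y i].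
  by apply/ffunP => i; rewrite !ffunE opprK.
by [].
Qed.
End Aux.
Arguments sg_sub {H k psi} hs {x y}.
Arguments sg_neg {H k psi} hs {x}.
Arguments sg_add {H k psi} hs {x y}.

Theorem lemma7p2 (H : finZmodType) (k : nat) (hk : (3 <= k)%N)
  (psi : {set tup H k}) (hpsi : balanced_pairwise_independent psi)
  (a : tup H k) :
  (* Completeness *)
  (forall alpha : tup H k, sat psi a alpha ->
     exists f : LEvert psi a -> LEvert psi [ffun=> 0],
       [/\ bijective f, alpha_perm alpha f & is_hom f]) /\
  (* Soundness *)
  (forall (alpha : tup H k) (f : LEvert psi a -> LEvert psi [ffun=> 0]),
     bijective f -> alpha_perm alpha f -> is_hom f -> sat psi a alpha).
Proof.
case: hpsi => hs _ _ _.
split.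
- move=> alpha halpha.
  pose g (v : vtx H k) : vtx H k := match v with
    | inl (i, b) => inl (i, b - alpha i)
    | inr beta => inr [ffun i => beta i - alpha i] end.
  pose h (v : vtx H k) : vtx H k := match v with
    | inl (i, b) => inl (i, b + alpha i)
    | inr beta => inr [ffun i => beta i + alpha i] end.
  have gP : forall v, is_vertex psi a v -> is_vertex psi [ffun=> 0] (g v).
    case=> [[i b]|beta] //= hb.
    rewrite /g /= /sat; apply: (mem_eq (sg_sub hs hb halpha)); apply/ffunP => j; rewrite !ffunE addr0.
    by rewrite opprD addrACA subrr addr0.
  have hP : forall v, is_vertex psi [ffun=> 0] v -> is_vertex psi a (h v).
    case=> [[i b]|beta] //= hb.
    rewrite /h /= /sat; apply: (mem_eq (sg_add hs hb halpha)); apply/ffunP => j; rewrite !ffunE addr0 addrA.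
    by [].
  exists (fun u => exist _ (g (val u)) (gP _ (valP u))).
  split.
  + exists (fun u => exist _ (h (val u)) (hP _ (valP u))).
    * move=> [v hv]; apply/val_inj => /=.
      case: v hv => [[i b]|beta] _ /=; first by rewrite subrK.
      by apply: f_equal; apply/ffunP => j; rewrite !ffunE subrK.
    * move=> [v hv]; apply/val_inj => /=.
      case: v hv => [[i b]|beta] _ /=; first by rewrite addrK.
      by apply: f_equal; apply/ffunP => j; rewrite !ffunE addrK.
  + by move=> [v hv] i b /= ->.
  + move=> [u hu] [v hv] /=.
    case: u hu => [[i b]|beta]; case: v hv => [[j c]|gamma] //= _ _.
    * by rewrite ffunE => /eqP ->.
    * by rewrite ffunE => /eqP ->.
- move=> alpha f [finv fK _] hperm hhom.
  case: (hs) => h0 _.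
  pose beta : tup H k := [ffun i => - a i].
  have hb : is_vertex psi a (inr beta).
    rewrite /= /sat.
    have -> : [ffun i => beta i + a i] = [ffun=> 0].
      by apply/ffunP => i; rewrite !ffunE addNr.
    by [].
  pose u : LEvert psi a := exist _ (inr beta) hb.
  have [gamma hg] : exists gamma, val (f u) = inr gamma.
    case E: (val (f u)) => [[i c]|gamma]; last by exists gamma.
    pose w : LEvert psi a := exist _ (inl (i, c + alpha i)) isT.
    have := hperm w i (c + alpha i) erefl.
    rewrite addrK -E => /val_inj /(can_inj fK) /(congr1 val) //.
  have gv : is_vertex psi [ffun=> 0] (inr gamma) by rewrite -hg; exact: valP.
  have geq : forall i, gamma i = beta i - alpha i.
    move=> i.
    pose w : LEvert psi a := exist _ (inl (i, beta i)) isT.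
    have := hhom u w; rewrite /= eqxx => /(_ isT).
    by rewrite hg (hperm w i (beta i) erefl) /= => /eqP.
  move: gv; rewrite /= /sat => gv.
  rewrite /sat.
  apply: (mem_eq (sg_sub hs hb gv)); apply/ffunP => i; rewrite !ffunE geq addr0 /beta ffunE.
  by rewrite addNr sub0r opprB opprK addrC.
Qed.
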